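(* Let $X=\{x_1,\dots,x_n\}$ be a finite biquandle and let $K_1,K_2$ be virtual knotoid diagrams. Then for all $i,k\in\{1,\dots,n\}$, \[\Phi_{X_{ik}}^{\mathbb{Z}}(K_1K_2)=\sum_{j=1}^{n}\Phi_{X_{ij}}^{\mathbb{Z}}(K_1)\,\Phi_{X_{jk}}^{\mathbb{Z}}(K_2).\]
   Context: A virtual knotoid diagram is an immersed oriented open curve in $S^2$ (oriented from the tail endpoint to the head endpoint) with finitely many transversal double points, each a classical crossing (with over/under information) or a virtual crossing. Product: for virtual knotoid diagrams $K_1,K_2$ in $S^2$ with tails $t_1,t_2$ and heads $h_1,h_2$, let $U$ be a disk neighborhood of $h_1$ meeting $K_1$ in a radius and $V$ a disk neighborhood of $t_2$ meeting $K_2$ in a radius. $K_1K_2$ is obtained by gluing $S^2\setminus\mathrm{Int}(U)$ and $S^2\setminus\mathrm{Int}(V)$ along a homeomorphism $\partial U\to\partial V$ sending the point $K_1\cap\partial U$ to $K_2\cap\partial V$; it is a virtual knotoid diagram in $S^2$ with tail $t_1$ and head $h_2$. A biquandle is a set $X$ with binary operations $\underline{\triangleright},\overline{\triangleright}$ such that for all $x,y,z$: $x\underline{\triangleright}x=x\overline{\triangleright}x$; the maps $x\mapsto x\overline{\triangleright}y$, $x\mapsto x\underline{\triangleright}y$ and $(x,y)\mapsto(y\overline{\triangleright}x,\,x\underline{\triangleright}y)$ are invertible; and $(x\underline{\triangleright}y)\underline{\triangleright}(z\underline{\triangleright}y)=(x\underline{\triangleright}z)\underline{\triangleright}(y\overline{\triangleright}z)$,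 $(x\underline{\triangleright}y)\overline{\triangleright}(z\underline{\triangleright}y)=(x\overline{\triangleright}z)\underline{\triangleright}(y\overline{\triangleright}z)$, $(x\overline{\triangleright}y)\overline{\triangleright}(z\overline{\triangleright}y)=(x\overline{\triangleright}z)\overline{\triangleright}(y\underline{\triangleright}z)$. Semi-arcs are the pieces into which crossings cut the curve; the tail (head) semi-arc contains the tail (head). An $X$-coloring assigns an element of $X$ to each semi-arc such that at each classical crossing, drawn with both strands oriented upward, incoming lower-left and lower-right colors $x,y$ give outgoing upper-left and upper-right colors $y\overline{\triangleright}x$ and $x\underline{\triangleright}y$, and at virtual crossings colors pass through unchanged. An $X_{ij}$-coloring is an $X$-coloring with tail semi-arc colored $x_i$ and head semi-arc colored $x_j$; $\Phi_{X_{ij}}^{\mathbb{Z}}(K)$ denotes the number of $X_{ij}$-colorings of $K$. *)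

(* Defs.v *)
From mathcomp Require Import all_boot.
Set Implicit Arguments. Unset Strict Implicit. Unset Printing Implicit Defensive.

(* bq_u x y = x \underline{\triangleright} y,  bq_o x y = x \overline{\triangleright} y *)
Record biquandle (X : Type) := Biquandle {
  bq_u : X -> X -> X;
  bq_o : X -> X -> X;
  bq_idem : forall x, bq_u x x = bq_o x x;
  bq_inv_o : forall y, bijective (fun x => bq_o x y);
  bq_inv_u : forall y, bijective (fun x => bq_u x y);
  bq_inv_S : bijective (fun p : X * X => (bq_o p.2 p.1, bq_u p.1 p.2));
  bq_ax1 : forall x y z,
    bq_u (bq_u x y) (bq_u z y) = bq_u (bq_u x z) (bq_o y z);
  bq_ax2 : forall x y z,
    bq_o (bq_u x y) (bq_u z y) = bq_u (bq_o x z) (bq_o y z);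
  bq_ax3 : forall x y z,
    bq_o (bq_o x y) (bq_o z y) = bq_o (bq_o x z) (bq_u y z)
}.

(* A virtual knotoid diagram is encoded by its (open) Gauss code: the
   sequence of classical-crossing passages met travelling from the tail to
   the head; letter (c, true) = passing crossing c as the over strand,
   (c, false) = passing it as the under strand.  gk_sign c = true iff
   crossing c is positive.  Virtual crossings carry no data. *)
Record gknotoid := GKnotoid {
  gk_word : seq (nat * bool);
  gk_sign : nat -> bool
}.

Definition gk_wf (K : gknotoid) : Prop :=
  forall c : nat,
    count_mem (c, true) (gk_word K) = count_mem (c, false) (gk_word K) /\
    count_mem (c, true) (gk_word K) <= 1.

(* Product K1 K2: concatenate Gauss codes, relabelling the crossings of K2
   so that they are disjoint from those of K1. *)
Definition gk_bound (K : gknotoid) : nat := (foldr maxn 0 (map fst (gk_word K))).+1.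

Definition gk_prod (K1 K2 : gknotoid) : gknotoid :=
  let N := gk_bound K1 in
  GKnotoid (gk_word K1 ++ map (fun l => (l.1 + N, l.2)) (gk_word K2))
           (fun c => if c < N then gk_sign K1 c else gk_sign K2 (c - N)).

(* Semi-arcs: with m = size (gk_word K) passages there are m+1 semi-arcs,
   semi-arc k lying between passage k-1 and passage k; semi-arc 0 is the tail
   semi-arc and semi-arc m the head semi-arc.  At a crossing c with over
   passage at position p and under passage at position q, the incoming colors
   are g p (over) and g q (under), the outgoing ones g p.+1 and g q.+1.
   Convention: at a positive crossing the over strand runs from lower-left to
   upper-right (both strands oriented upward); at a negative one the under
   strand does. Incoming lower-left x, lower-right y give upper-left
   y ▷̄ x and upper-right x ▷ y. *)
Definition crossing_ok (X : eqType) (B : biquandle X) (sgn : bool)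
    (overin overout underin underout : X) : bool :=
  if sgn then
    (* x = overin (lower-left), y = underin *)
    (overout == bq_u B overin underin) && (underout == bq_o B underin overin)
  else
    (* x = underin (lower-left), y = overin *)
    (underout == bq_u B underin overin) && (overout == bq_o B overin underin).

Definition is_coloring (X : finType) (B : biquandle X) (K : gknotoid)
    (f : {ffun 'I_(size (gk_word K)).+1 -> X}) : bool :=
  let w := gk_word K in
  let g := fun k : nat => f (inord k) in
  [forall p : 'I_(size w), forall q : 'I_(size w),
    let lp := nth (0, false) w p in
    let lq := nth (0, false) w q in
    (lp.2 && ~~ lq.2 && (lp.1 == lq.1)) ==>
      crossing_ok B (gk_sign K lp.1) (g p) (g p.+1) (g q) (g q.+1)].

Definition Phi (X : finType) (B : biquandle X) (xi xj : X) (K : gknotoid) : nat :=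
  #|[set f : {ffun 'I_(size (gk_word K)).+1 -> X} |
      @is_coloring X B K f && (f ord0 == xi) && (f ord_max == xj)]|.

(* Main.v *)
Require Import Defs.
From mathcomp Require Import all_boot.
Set Implicit Arguments. Unset Strict Implicit. Unset Printing Implicit Defensive.

Section S.
Variables (X : finType) (B : biquandle X).

Definition body (K : gknotoid) (g : nat -> X) (p q : nat) : bool :=
  let w := gk_word K in
  let lp := nth (0, false) w p in
  let lq := nth (0, false) w q in
  (lp.2 && ~~ lq.2 && (lp.1 == lq.1)) ==>
      crossing_ok B (gk_sign K lp.1) (g p) (g p.+1) (g q) (g q.+1).

Definition colK (K : gknotoid) (g : nat -> X) : bool :=
  [forall p : 'I_(size (gk_word K)), forall q : 'I_(size (gk_word K)), body K g p q].

Lemma is_coloringE K (f : {ffun 'I_(size (gk_word K)).+1 -> X}) :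
  @is_coloring X B K f = colK K (fun k => f (inord k)).
Proof. by []. Qed.

Lemma forall2P n (P : nat -> nat -> bool) :
  reflect (forall p q, p < n -> q < n -> P p q)
          [forall p : 'I_n, forall q : 'I_n, P p q].
Proof.
apply: (iffP forallP) => H.
  move=> p q hp hq; exact: (forallP (H (Ordinal hp)) (Ordinal hq)).
move=> p; apply/forallP => q; exact: H.
Qed.

Lemma colK_ext K g g' : (forall k, k <= size (gk_word K) -> g k = g' k) ->
  colK K g = colK K g'.
Proof.
move=> H; apply: eq_forallb => p; apply: eq_forallb => q.
by rewrite /body !H // ?ltn_ord // ltnW // ltn_ord.
Qed.

Lemma bound_lt (w : seq (nat * bool)) p : p < size w ->
  (nth (0, false) w p).1 < (foldr maxn 0 (map fst w)).+1.
Proof.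
elim: w p => [|a w IH] [|p] //= hp; rewrite ltnS.
  by rewrite leq_maxl.
by apply: leq_trans (leq_maxr _ _); rewrite -ltnS; apply: IH.
Qed.

Section Prod.
Variables K1 K2 : gknotoid.
Let n1 := size (gk_word K1).
Let n2 := size (gk_word K2).
Let N := gk_bound K1.

Lemma size_prod : size (gk_word (gk_prod K1 K2)) = n1 + n2.
Proof. by rewrite /= size_cat size_map. Qed.

Lemma nth_prod1 p : p < n1 ->
  nth (0, false) (gk_word (gk_prod K1 K2)) p = nth (0, false) (gk_word K1) p.
Proof. by move=> hp; rewrite /= nth_cat hp. Qed.

Lemma nth_prod2 p : p < n2 ->
  nth (0, false) (gk_word (gk_prod K1 K2)) (p + n1) =
  ((nth (0, false) (gk_word K2) p).1 + N, (nth (0, false) (gk_word K2) p).2).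
Proof.
move=> hp; rewrite /= nth_cat.
rewrite -/n1 ltnNge leq_addl /= addnK.
by rewrite (nth_map (0, false)).
Qed.

Lemma body_prod11 g p q : p < n1 -> q < n1 ->
  body (gk_prod K1 K2) g p q = body K1 g p q.
Proof.
move=> hp hq; rewrite /body !nth_prod1 //=.
by rewrite (bound_lt hp).
Qed.

Lemma body_prod22 g p q : p < n2 -> q < n2 ->
  body (gk_prod K1 K2) g (p + n1) (q + n1) = body K2 (fun k => g (k + n1)) p q.
Proof.
move=> hp hq; rewrite /body !nth_prod2 //= eqn_add2r.
rewrite ltnNge leq_addl /= addnK -!addSn.
by [].
Qed.

Lemma body_prod12 g p q : p < n1 -> n1 <= q -> q < n1 + n2 ->
  body (gk_prod K1 K2) g p q.
Proof.
move=> hp hq hq2; rewrite /body nth_prod1 //.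
have -> : q = (q - n1) + n1 by rewrite subnK.
rewrite nth_prod2; last by rewrite ltn_subLR // addnC.
rewrite /=.
have h1 := bound_lt hp.
suff -> : ((nth (0, false) (gk_word K1) p).1 ==
     (nth (0, false) (gk_word K2) (q - n1)).1 + N) = false by rewrite andbF.
apply/negbTE; rewrite neq_ltn; apply/orP; left.
by apply: leq_trans h1 _; rewrite leq_addl.
Qed.

Lemma body_prod21 g p q : n1 <= p -> p < n1 + n2 -> q < n1 ->
  body (gk_prod K1 K2) g p q.
Proof.
move=> hp hp2 hq; rewrite /body (nth_prod1 hq).
have -> : p = (p - n1) + n1 by rewrite subnK.
rewrite nth_prod2; last by rewrite ltn_subLR // addnC.
rewrite /=.
have h1 := bound_lt hq.
suff -> : ((nth (0, false) (gk_word K2) (p - n1)).1 + N ==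
     (nth (0, false) (gk_word K1) q).1) = false by rewrite andbF.
apply/negbTE; rewrite neq_ltn; apply/orP; right.
by apply: leq_trans h1 _; rewrite leq_addl.
Qed.

Lemma colK_prod g : colK (gk_prod K1 K2) g =
  colK K1 g && colK K2 (fun k => g (k + n1)).
Proof.
rewrite /colK size_prod; apply/forall2P/andP.
  move=> H; split; apply/forall2P => p q hp hq.
    rewrite -body_prod11 //; apply: H; apply: leq_trans (leq_addr _ _); done.
  rewrite -body_prod22 //; apply: H; rewrite addnC ltn_add2l //.
case=> /forall2P H1 /forall2P H2 p q hp hq.
case: (ltnP p n1) => h1; case: (ltnP q n1) => h2.
- by rewrite body_prod11 //; apply: H1.
- exact: body_prod12.
- exact: body_prod21.
have -> : p = (p - n1) + n1 by rewrite subnK.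
have -> : q = (q - n1) + n1 by rewrite subnK.
rewrite body_prod22; first (apply: H2); by rewrite ltn_subLR // addnC.
Qed.
End Prod.
End S.

Section Count.
Variables (X : finType) (n1 n2 n : nat) (hn : n = n1 + n2).
Variables (C C1 C2 : (nat -> X) -> bool).
Hypothesis C1e : forall g g', (forall k, k <= n1 -> g k = g' k) -> C1 g = C1 g'.
Hypothesis C2e : forall g g', (forall k, k <= n2 -> g k = g' k) -> C2 g = C2 g'.
Hypothesis Cs : forall g, C g = C1 g && C2 (fun k => g (k + n1)).

Definition gof m (f : {ffun 'I_m.+1 -> X}) : nat -> X := fun k => f (inord k).
Definition toF m (g : nat -> X) : {ffun 'I_m.+1 -> X} := [ffun i : 'I_m.+1 => g i].

Lemma gof_toF m g k : k <= m -> gof (toF m g) k = g k.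
Proof. by move=> hk; rewrite /gof ffunE inordK. Qed.

Lemma gofE m (f : {ffun 'I_m.+1 -> X}) (i : 'I_m.+1) : gof f i = f i.
Proof. by rewrite /gof inord_val. Qed.

Lemma gof0 m (f : {ffun 'I_m.+1 -> X}) : gof f 0 = f ord0.
Proof. by rewrite -(gofE f ord0). Qed.

Lemma gofmax m (f : {ffun 'I_m.+1 -> X}) : gof f m = f ord_max.
Proof. by rewrite -(gofE f ord_max). Qed.

Variables a b : X.

Definition Sp := [set f : {ffun 'I_n.+1 -> X} | C (gof f) && (f ord0 == a) && (f ord_max == b)].
Definition Ap j := [set f : {ffun 'I_n1.+1 -> X} | C1 (gof f) && (f ord0 == a) && (f ord_max == j)].
Definition Bp j := [set f : {ffun 'I_n2.+1 -> X} | C2 (gof f) && (f ord0 == j) && (f ord_max == b)].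
Definition Tp := [set t : {ffun 'I_n1.+1 -> X} * {ffun 'I_n2.+1 -> X} |
   [&& C1 (gof t.1), t.1 ord0 == a, C2 (gof t.2), t.2 ord_max == b & t.1 ord_max == t.2 ord0]].

Definition splitf (f : {ffun 'I_n.+1 -> X}) :=
  (toF n1 (gof f), toF n2 (fun k => gof f (k + n1))).
Definition joinf (t : {ffun 'I_n1.+1 -> X} * {ffun 'I_n2.+1 -> X}) :=
  toF n (fun k => if k <= n1 then gof t.1 k else gof t.2 (k - n1)).

Lemma joinK : cancel splitf joinf.
Proof.
move=> f; apply/ffunP => i; rewrite ffunE /=.
have hi : i <= n1 + n2 by rewrite -hn -ltnS.
case: ifP => h.
  by rewrite gof_toF // gofE.
rewrite gof_toF; last by rewrite leq_subLR.
by rewrite subnK ?gofE // ltnW // ltnNge h.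
Qed.

Lemma imS : splitf @: Sp = Tp.
Proof.
apply/setP => t; apply/imsetP/idP.
  case=> f; rewrite inE => /andP [/andP [hC h0] hm] ->.
  rewrite inE /= !ffunE /=.
  move: hC; rewrite Cs => /andP [hC1 hC2].
  rewrite (@C1e _ (gof f)); last by move=> k hk; rewrite gof_toF.
  rewrite (@C2e _ (fun k => gof f (k + n1))); last by move=> k hk; rewrite gof_toF.
  by rewrite hC1 hC2 gof0 h0 add0n eqxx addnC -hn gofmax hm.
rewrite inE => /and5P [hC1 h0 hC2 hm heq].
exists (joinf t).
  rewrite inE Cs.
  rewrite (@C1e _ (gof t.1)); last first.
    by move=> k hk; rewrite gof_toF ?hk // hn (leq_trans hk) // leq_addr.
  rewrite (@C2e _ (gof t.2)); last first.
    move=> k hk; rewrite gof_toF; last by rewrite hn addnC leq_add2l.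
    case: ifP => h.
      have -> : k = 0 by move: h; rewrite -{2}(add0n n1) leq_add2r; case: k {hk}.
      by rewrite add0n gofmax gof0 (eqP heq).
    by rewrite addnK.
  rewrite hC1 hC2 /= !ffunE /= gof0 h0 /=.
  case: ifP => h.
    have e2 : n2 = 0 by move: h; rewrite hn -{2}(addn0 n1) leq_add2l leqn0 => /eqP.
    have -> : n = n1 by rewrite hn e2 addn0.
    have e3 : gof t.2 n2 = gof t.2 0.
      have e4 : forall k, k = 0 -> gof t.2 k = gof t.2 0 by move=> k ->.
      exact: e4.
    by rewrite gofmax (eqP heq) -gof0 -e3 gofmax.
  by rewrite hn addKn gofmax.
case: t hC1 h0 hC2 hm heq => t1 t2 /= hC1 h0 hC2 hm heq; rewrite /splitf /=.
congr pair; apply/ffunP => i; rewrite !ffunE.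
  rewrite gof_toF; last by rewrite hn (leq_trans _ (leq_addr _ _)) // -ltnS.
  by rewrite -ltnS ltn_ord gofE.
rewrite gof_toF; last by rewrite hn addnC leq_add2l -ltnS.
case: ifP => h.
  have e : nat_of_ord i = 0 by move: h; rewrite -{2}(add0n n1) leq_add2r leqn0 => /eqP.
  by rewrite -gofE e add0n gofmax (eqP heq) gof0.
by rewrite addnK gofE.
Qed.

Lemma count_main : #|Sp| = \sum_(j : X) #|Ap j| * #|Bp j|.
Proof.
rewrite -(card_imset _ (can_inj joinK)) imS -sum1_card.
rewrite (partition_big (fun t : {ffun 'I_n1.+1 -> X} * {ffun 'I_n2.+1 -> X} => t.1 ord_max) (predT : pred X)) //=.
apply: eq_bigr => j _.
rewrite -cardsX sum1_card; apply: eq_card => t.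
rewrite !inE /=.
case: t => t1 t2 /=.
rewrite unfold_in /= inE /=.
case: (t1 ord_max =P j) => [->|]; last by rewrite !andbF.
by rewrite (eq_sym j); case: (C1 _); case: (t1 ord0 == a); case: (C2 _); case: (t2 ord_max == b); case: (t2 ord0 == j).
Qed.
End Count.

Theorem mainTheorem4 (X : finType) (B : biquandle X) (K1 K2 : gknotoid)
    (wf1 : gk_wf K1) (wf2 : gk_wf K2) (xi xk : X) :
  Phi B xi xk (gk_prod K1 K2) = \sum_(xj : X) Phi B xi xj K1 * Phi B xj xk K2.
Proof.
exact: (@count_main X (size (gk_word K1)) (size (gk_word K2))
  (size (gk_word (gk_prod K1 K2))) (size_prod K1 K2)
  (colK B (gk_prod K1 K2)) (colK B K1) (colK B K2)
  (@colK_ext X B K1) (@colK_ext X B K2) (@colK_prod X B K1 K2) xi xk).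
Qed.
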